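(* Let $T=(V,E)$ be a finite rooted tree (an elimination tree), let $\Pr$ be a probability distribution over a finite set of queries, and let $R\subseteq V$. Let $u,v\in R$ be such that $v\in A(u)$ (i.e., $v$ is a proper ancestor of $u$) and $\mathrm{path}(u,v)\cap R=\emptyset$. Then $$\mathbb{E}[I(u,R)]=\mathbb{E}[I(u,v)],$$ where the expectation is over the query distribution.
   Context: $T=(V,E)$ is a finite rooted tree. For $u\in V$, $T(u)$ denotes the set of nodes of the subtree rooted at $u$ (including $u$), $A(u)$ the set of proper ancestors of $u$ (the nodes on the path from $u$ to the root, excluding $u$), and for $v\in A(u)$, $\mathrm{path}(u,v)$ the set of nodes strictly between $u$ and $v$ on that path. Each non-leaf node of $T$ is associated with a variable from a finite set $X$; $\mathrm{vars}(u)\subseteq X$ denotes the set of variables associated with the nodes of $T(u)$. Each query $q$ determines a set $Z_q\subseteq X$ (its summed-out variables). For $R\subseteq V$, $u\in V$ and a query $q$, define $I_q(u,R)=1$ if (i) $u\in R$, (ii) $\mathrm{vars}(u)\subseteq Z_q$, and (iii) there is no $w\in A(u)$ with $w\in R$ and $\mathrm{vars}(w)\subseteq Z_q$; otherwise $I_q(u,R)=0$. Set $\mathbb{E}[I(u,R)]=\sum_q \Pr(q)\,I_q(u,R)$. For $v\in A(u)$ write $\mathbb{E}[I(u,v)]:=\mathbb{E}[I(u,\{u,v\})]$. *)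

(* Defs.v *)
From mathcomp Require Import all_boot all_order all_algebra.
Set Implicit Arguments. Unset Strict Implicit. Unset Printing Implicit Defensive.
Import Order.TTheory GRing.Theory Num.Theory.

Section Tree.
Variables (V X : finType) (par : V -> option V) (lab : V -> option X).

Definition parent_rel : rel V := fun x y => par x == Some y.

(* w \in A(u): w is a proper ancestor of u *)
Definition ancb (u w : V) : bool :=
  [exists z, (par u == Some z) && connect parent_rel z w].

Definition rooted_tree : Prop :=
  (exists r : V, forall x, (par x == None) = (x == r)) /\
  (forall x, ~~ ancb x x).

Definition nonleaf_labelled : Prop :=
  forall x, (lab x != None) = [exists y, par y == Some x].

Definition subtree (u : V) : {set V} := [set x | (x == u) || ancb x u].

Definition vars (u : V) : {set X} :=
  [set a | [exists w in subtree u, lab w == Some a]].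

Definition Iq (Zq : {set X}) (u : V) (R : {set V}) : bool :=
  [&& u \in R, vars u \subset Zq &
      ~~ [exists w, [&& ancb u w, w \in R & vars w \subset Zq]]].

Definition EI (K : numDomainType) (Q : finType) (Pr : Q -> K) (Z : Q -> {set X})
    (u : V) (R : {set V}) : K :=
  (\sum_(q : Q) Pr q * (Iq (Z q) u R)%:R)%R.

End Tree.

(* Main.v *)
Require Import Defs.
From mathcomp Require Import all_boot all_order all_algebra.
Import GRing.Theory Num.Theory.
Set Implicit Arguments.
Unset Strict Implicit.

Section H.
Variables (V X : finType) (par : V -> option V) (lab : V -> option X).
Local Notation e := (parent_rel par).

Lemma conn_step x y : connect e x y -> x = y \/ exists2 z, e x z & connect e z y.
Proof.
move/connectP=> [[|z p] /=]; first by move=> _ ->; left.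
case/andP=> exz pth ->; right; exists z => //; apply/connectP; exists p => //.
Qed.

Lemma ancbP u w : reflect (exists2 z, par u = Some z & connect e z w) (ancb par u w).
Proof.
apply: (iffP existsP) => [[z /andP [/eqP H1 H2]]|[z H1 H2]]; exists z => //.
by rewrite H1 eqxx.
Qed.

Lemma anc_conn x y : ancb par x y -> connect e x y.
Proof.
case/ancbP=> z H1 H2; apply: connect_trans H2; apply: connect1.
by rewrite /parent_rel H1.
Qed.

Lemma anc_trans x y w : ancb par x y -> connect e y w -> ancb par x w.
Proof.
case/ancbP=> z H1 H2 H3; apply/ancbP; exists z => //; exact: connect_trans H3.
Qed.

Lemma conn_anc x y : connect e x y -> x <> y -> ancb par x y.
Proof.
case/conn_step => [->//|[z H1 H2] _]; apply/ancbP; exists z => //.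
by apply/eqP.
Qed.

Lemma conn_total w v : forall z, connect e z w -> connect e z v ->
  connect e w v || connect e v w.
Proof.
move=> z /connectP [p]; elim: p z => [|y p IH] z /=.
  by move=> _ -> ->.
case/andP=> ezy pth Hw Hzv.
case: (conn_step Hzv) => [<-|[y' ezy' Hy'v]].
  apply/orP; right; apply/connectP; exists (y :: p) => //=; by rewrite ezy.
have Eyy : y = y'.
  move: ezy ezy'; rewrite /parent_rel => /eqP -> /eqP; by case.
subst y'; exact: IH pth Hw Hy'v.
Qed.

End H.

Theorem lemma1 (K : realFieldType) (V X Q : finType)
    (par : V -> option V) (lab : V -> option X)
    (Pr : Q -> K) (Z : Q -> {set X}) (R : {set V}) (u v : V) :
  rooted_tree par ->
  nonleaf_labelled par lab ->
  (forall q, (0 <= Pr q)%R) ->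
  (\sum_(q : Q) Pr q)%R = 1%R ->
  u \in R -> v \in R ->
  ancb par u v ->
  (forall w, ancb par u w -> ancb par w v -> w \notin R) ->
  EI par lab Pr Z u R = EI par lab Pr Z u [set u; v].
Proof.
move=> [_ acyc] _ _ _ uR vR uv hpath.
rewrite /EI; apply: eq_bigr => q _; congr (_ * _%:R)%R.
rewrite /Iq uR !inE eqxx /=; congr (_ && ~~ _).
have subv : forall w, ancb par v w -> vars par lab v \subset vars par lab w.
  move=> w vw; apply/subsetP => a; rewrite !inE => /existsP [x /andP [xs xl]].
  apply/existsP; exists x; rewrite xl andbT !inE; apply/orP; right.
  move: xs; rewrite inE => /orP [/eqP ->//|xv].
  exact: anc_trans xv (anc_conn vw).
apply/idP/idP.
- case/existsP=> w /and3P [uw wR ws]; apply/existsP; exists v.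
  rewrite uv !inE eqxx orbT /=.
  case/ancbP: uw => z Hz zw; case/ancbP: (uv) => z' Hz' zv.
  move: Hz'; rewrite Hz => -[?]; subst z'.
  case/orP: (conn_total zw zv) => [wv|vw].
  + have [Ewv|nwv] := eqVneq w v; first by rewrite -Ewv.
    have wv' : ancb par w v by exact: (conn_anc wv (elimN eqP nwv)).
    have uw' : ancb par u w by apply/ancbP; exists z.
    by rewrite (negPf (hpath w uw' wv')) in wR.
  + have [Evw|nvw] := eqVneq v w; first by rewrite Evw.
    apply: subset_trans (subv w _) ws; exact: (conn_anc vw (elimN eqP nvw)).
- case/existsP=> w /and3P [uw]; rewrite !inE => /orP [/eqP Ew|/eqP Ew] ws.
  + by move: (acyc u); rewrite -{2}Ew uw.
  + by apply/existsP; exists v; rewrite uv vR -Ew.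
Qed.
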